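(* Let $\mathcal{G}=\langle S,A,T,s_0,F\rangle$ be a two-player turn-based deterministic reachability game, let $Y\subseteq\mathrm{Win}_2(\mathcal{G},F)\setminus F$, and let $s_1,s_2\in\mathrm{Win}_2(\mathcal{G},F)\setminus(F\cup Y)$. Then $\mathrm{DSWin}_1(\{s_1,s_2\},Y)$ equals P1's sure winning region in the turn-based game with state set $\mathrm{Win}_2(\mathcal{G}^2_{X,Y},F)$, where $X=\{s_1,s_2\}$, and transition function $\widehat T_{X,Y}$, in which P1's goal is to reach the target set $\mathrm{DSWin}_1(\{s_1\},Y)\cup\mathrm{DSWin}_1(\{s_2\},Y)$ and P2's goal is to prevent P1 from reaching it.
   Context: A two-player turn-based deterministic reachability game is a tuple $\mathcal{G}=\langle S,A,T,s_0,F\rangle$: $S$ finite, partitioned into P1 states $S_1$ and P2 states $S_2$; $A=A_1\cup A_2$ (P1 and P2 actions); $T:(S_1\times A_1)\cup(S_2\times A_2)\to S$ deterministic, possibly partial ($a$ enabled at $s$ iff $T(s,a)$ defined; every state has an enabled action); $s_0$ initial; $F\subseteq S$ a set of sink states (P2's goal). For a target $R\subseteq S$: $Z_0=R$, $Z_{k+1}=Z_k\cup\{s\in S_1:T(s,a)\in Z_k\ \forall\text{ enabled }a\}\cup\{s\in S_2:T(s,a)\in Z_k\text{ for some enabled }a\}$; $\mathrm{Win}_2(\mathcal{G},R)=\bigcup_kZ_k$; $\mathrm{rank}_{\mathcal{G},R}(s)=\min\{k:s\in Z_k\}$ ($\infty$ if none). For disjoint $X,Y\subseteq\mathrm{Win}_2(\mathcal{G},F)\setminus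 F$ (traps $X$, fake targets $Y$): the true game $\mathcal{G}^1_{X,Y}$ has states $S$, transitions $T_{X,Y}(q,a)=T(q,a)$ if $q\notin X\cup Y$ and $T_{X,Y}(q,a)=q$ if $q\in X\cup Y$; P2's perceptual game $\mathcal{G}^2_{X,Y}$ has transitions $T$ and goal $F\cup Y$, with $\mathrm{rank}_{\mathcal{G}^2_{X,Y}}:=\mathrm{rank}_{\mathcal{G},F\cup Y}$; $\mathrm{Win}_2(\mathcal{G}^2_{X,Y},F)$ is P2's winning region for target $F$ computed with transitions $T$. Subjectively rationalizable actions: for $q\in S_2\cap\mathrm{Win}_2(\mathcal{G},F)\setminus(F\cup Y)$, $\mathsf{SRActs}_{X,Y}(q)=\{a\text{ enabled}:\mathrm{rank}_{\mathcal{G}^2_{X,Y}}(T(q,a))<\mathrm{rank}_{\mathcal{G}^2_{X,Y}}(q)\}$; at every other state, all enabled actions. $\widehat T_{X,Y}(q,a)=T(q,a)$ if $a\in\mathsf{SRActs}_{X,Y}(q)$, undefined otherwise. A memoryless deterministic strategy of either player is subjectively rationalizable if it picks an action in $\mathsf{SRActs}_{X,Y}(q)$ at each of that player's states $q$. A memoryless deterministic P1 strategy $\pi_1$ is stealthy deceptive sure winning at $s$ if it is subjectively rationalizable and, for every subjectively rationalizable memoryless deterministic P2 strategy $\pi_2$, every path from $s$ generated by $(\pi_1,\pi_2)$ in the true game $\mathcal{G}^1_{X,Y}$ visits $X\cup Y$ within finitely many steps; $\mathrm{DSWin}_1(X,Y)$ is the set of states at which such a strategy exists. P1's sure winning region for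 a target $R'$ in a turn-based game is the set of states from which P1 has a strategy guaranteeing, against every P2 strategy, that every path visits $R'$ within finitely many steps. *)

(* Defs.v *)
From mathcomp Require Import all_boot.
From Stdlib Require Import ClassicalEpsilon.

Set Implicit Arguments.
Unset Strict Implicit.
Unset Printing Implicit Defensive.

(* A two-player turn-based deterministic game:
   - S : finite state type, p1 q = true iff q is a P1 state (P2 states: ~~ p1 q);
   - A : finite action type;
   - T : partial deterministic transition function (T q a = None: a not enabled at q). *)

Section Game.
Variables (S A : finType) (p1 : pred S) (T : S -> A -> option S).

Fixpoint attr (R : {set S}) (k : nat) : {set S} :=
  match k with
  | 0 => R
  | k'.+1 =>
      let Z := attr R k' in
      Z :|: [set s | p1 s && [forall a, if T s a is Some t then t \in Z else true]]
        :|: [set s | ~~ p1 s && [exists a, if T s a is Some t then t \in Z else false]]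
  end.

Definition Win2 (R : {set S}) (s : S) : Prop := exists k, s \in attr R k.

(* rank_{G,R}(s) = min {k | s \in Z_k}; None encodes infinity *)
Definition rank (R : {set S}) (s : S) : option nat :=
  match excluded_middle_informative (exists k, s \in attr R k) with
  | left H => Some (@ex_minn (fun k => s \in attr R k) H)
  | right _ => None
  end.

Definition rank_lt (x y : option nat) : bool :=
  match x, y with
  | Some m, Some n => m < n
  | Some _, None => true
  | None, _ => false
  end.

(* a \in SRActs_{X,Y}(q) (it does not depend on X); the perceptual rank is
   rank_{G, F \cup Y}. *)
Definition SRActs (F Y : {set S}) (q : S) (a : A) : Prop :=
  match T q a with
  | None => False
  | Some t =>
      (~~ p1 q /\ Win2 F q /\ q \notin F :|: Y) ->
      rank_lt (rank (F :|: Y) t) (rank (F :|: Y) q)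
  end.

(* \hat T_{X,Y}, restricted to the state set Win_2(G^2_{X,Y}, F) (= Win2 F, computed
   with T): relational form, q --a--> t. *)
Definition hat_step (F Y : {set S}) (q : S) (a : A) (t : S) : Prop :=
  Win2 F q /\ SRActs F Y q a /\ T q a = Some t /\ Win2 F t.

Definition SR1 (F Y : {set S}) (pi : S -> A) : Prop :=
  forall q, p1 q -> SRActs F Y q (pi q).
Definition SR2 (F Y : {set S}) (pi : S -> A) : Prop :=
  forall q, ~~ p1 q -> SRActs F Y q (pi q).

Definition Ttrue (X Y : {set S}) (q : S) (a : A) : option S :=
  if q \in X :|: Y then (if T q a is Some _ then Some q else None) else T q a.

Definition DSWin1 (F X Y : {set S}) (s : S) : Prop :=
  exists pi1 : S -> A, SR1 F Y pi1 /\
    forall pi2 : S -> A, SR2 F Y pi2 ->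
      forall p : nat -> S, p 0 = s ->
        (forall i, Ttrue X Y (p i) (if p1 (p i) then pi1 (p i) else pi2 (p i))
                   = Some (p i.+1)) ->
        exists i, p i \in X :|: Y.

End Game.

(* Strategies are general (history dependent) deterministic: sigma h q is the action
   chosen at current state q after history h (the earlier states); they must pick an
   enabled action at each of the player's states. *)
Definition sure_win1 (S A : Type) (p1 : pred S) (step : S -> A -> S -> Prop)
    (Dom : S -> Prop) (R : S -> Prop) (s : S) : Prop :=
  Dom s /\
  exists sigma1 : seq S -> S -> A,
    (forall h q, Dom q -> p1 q -> exists t, step q (sigma1 h q) t) /\
    forall sigma2 : seq S -> S -> A,
      (forall h q, Dom q -> ~~ p1 q -> exists t, step q (sigma2 h q) t) ->
      forall p : nat -> S, p 0 = s ->
        (forall i, step (p i)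
                        ((if p1 (p i) then sigma1 else sigma2) (mkseq p i) (p i))
                        (p i.+1)) ->
        exists i, R (p i).

(* Main.v *)
Require Import Defs.
From Stdlib Require Import ClassicalEpsilon Classical.
From mathcomp Require Import all_boot.

Set Implicit Arguments.
Unset Strict Implicit.
Unset Printing Implicit Defensive.

Lemma unif_bound (A : finType) (P : A -> nat -> Prop) :
  (forall a j k, j <= k -> P a j -> P a k) -> (forall a, exists k, P a k) ->
  exists K, forall a, P a K.
Proof.
move=> Hm Hex.
have: forall l : seq A, exists K, forall a, a \in l -> P a K.
  elim=> [|b l [K IH]]; first by exists 0.
  case: (Hex b) => kb Hb; exists (maxn K kb) => a; rewrite inE => /orP[/eqP->|Ha].
  - by apply: Hm Hb; exact: leq_maxr.
  - by apply: Hm (IH a Ha); exact: leq_maxl.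
case/(_ (enum A)) => K HK; exists K => a; apply HK; by rewrite mem_enum.
Qed.

Section Proof.
Variables (S A : finType) (p1 : pred S) (T : S -> A -> option S) (F Y : {set S}).
Hypothesis Henabled : forall s, exists a, T s a <> None.
Hypothesis Hsink : forall f a, f \in F -> T f a <> None -> T f a = Some f.
Hypothesis HY : forall y, y \in Y -> Win2 p1 T F y.

Notation W := (Win2 p1 T F).
Notation SR := (SRActs p1 T F Y).

Lemma attr_S (R : {set S}) k q : q \in attr p1 T R k -> q \in attr p1 T R k.+1.
Proof. move=> H /=; by rewrite !inE H. Qed.

Lemma attr_le (R : {set S}) j k q : j <= k -> q \in attr p1 T R j -> q \in attr p1 T R k.
Proof.
elim: k => [|k IH]; first by rewrite leqn0 => /eqP->.
rewrite leq_eqVlt => /orP[/eqP-> //|hlt] H; apply: attr_S; exact: IH.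
Qed.

Lemma attr_Rmono (R R' : {set S}) k q : R \subset R' -> q \in attr p1 T R k -> q \in attr p1 T R' k.
Proof.
move=> hRR'; elim: k q => [|k IH] q /=; first by move/(subsetP hRR').
rewrite !inE => /orP[/orP[H|/andP[hp /forallP H]]|/andP[hp /existsP[a H]]].
- by rewrite IH.
- apply/orP; left; apply/orP; right; rewrite hp /=; apply/forallP => a.
  move: (H a); case: (T q a) => // t; exact: IH.
- apply/orP; right; rewrite hp /=; apply/existsP; exists a.
  move: H; case: (T q a) => // t; exact: IH.
Qed.

Lemma attr_P1_succ k q a t : q \in attr p1 T F k -> p1 q -> T q a = Some t ->
  q \in F \/ t \in attr p1 T F k.
Proof.
elim: k q => [|k IH] q /=; first by left.
rewrite !inE => /orP[/orP[H|/andP[_ /forallP H]]|/andP[hp _]] hq hT.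
- case: (IH q H hq hT) => [->|h]; [by left | right; by rewrite h].
- right; move: (H a); rewrite hT => ->; done.
- by rewrite hq in hp.
Qed.

Lemma W_P1 q a t : W q -> p1 q -> T q a = Some t -> W t.
Proof.
move=> [k Hk] hp hT; case: (attr_P1_succ Hk hp hT) => [hF|ht]; last by exists k.
have := @Hsink _ a hF; rewrite hT => /(_ ltac:(done)) [->]; by exists k.
Qed.

Lemma WFY k q : q \in attr p1 T (F :|: Y) k -> W q.
Proof.
elim: k q => [|k IH] q /=.
  rewrite inE => /orP[h|h]; [by exists 0 | exact: HY].
rewrite !inE => /orP[/orP[H|/andP[hp /forallP H]]|/andP[hp /existsP[a H]]].
- exact: IH.
- have [K HK] : exists K, forall a, forall t, T q a = Some t -> t \in attr p1 T F K.
    apply: unif_bound.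
      by move=> a j k' hjk Hj t ht; apply: attr_le hjk (Hj t ht).
    move=> a; case hT: (T q a) => [t|]; last by exists 0.
    have Ht : t \in attr p1 T (F :|: Y) k by move: (H a); rewrite hT.
    have [j Hj] := IH t Ht.
    by exists j => t' [<-].
  exists K.+1; rewrite /= !inE; apply/orP; left; apply/orP; right; rewrite hp /=.
  apply/forallP => a; case hT: (T q a) => [t|] //; exact: HK hT.
- move: H; case hT: (T q a) => [t|] // /IH [j Hj].
  exists j.+1; rewrite /= !inE; apply/orP; right; rewrite hp /=.
  by apply/existsP; exists a; rewrite hT.
Qed.

Lemma W_FY q : W q -> Win2 p1 T (F :|: Y) q.
Proof. move=> [k Hk]; exists k; apply: attr_Rmono Hk; exact: subsetUl. Qed.

Lemma rank_some (R : {set S}) q m : rank p1 T R q = Some m -> q \in attr p1 T R m.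
Proof.
rewrite /rank; case: excluded_middle_informative => [H|//].
by case: ex_minnP => m0 Hm0 _ [<-].
Qed.

Lemma rankP (R : {set S}) q : (exists k, q \in attr p1 T R k) ->
  exists m, rank p1 T R q = Some m /\ q \in attr p1 T R m /\
            forall n, q \in attr p1 T R n -> m <= n.
Proof.
move=> H; rewrite /rank; case: excluded_middle_informative => [H'|//].
case: ex_minnP => m Hm Hmin; by exists m.
Qed.

Lemma rank_step q : W q -> q \notin F :|: Y -> ~~ p1 q ->
  exists a t, T q a = Some t /\
    rank_lt (rank p1 T (F :|: Y) t) (rank p1 T (F :|: Y) q).
Proof.
move=> Wq hq hp.
have [m [-> [Hm Hmin]]] := rankP (W_FY Wq).
case: m Hm Hmin => [|m] Hm Hmin; first by rewrite /= (negbTE hq) in Hm.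
move: Hm; rewrite /= !inE => /orP[/orP[H1|/andP[h _]]|/andP[_ /existsP[a Ha]]].
- by have := Hmin m H1; rewrite ltnn.
- by rewrite h in hp.
- move: Ha; case hT: (T q a) => [t|] // Ht; exists a, t; split=> //.
  have [m' [-> [_ Hmin']]] := rankP (ex_intro _ m Ht).
  exact: Hmin' _ Ht.
Qed.

Lemma P2_succ k q : q \in attr p1 T F k -> ~~ p1 q -> q \notin F ->
  exists a t, T q a = Some t /\ W t.
Proof.
elim: k q => [|k IH] q /=; first by move=> ->.
rewrite !inE => /orP[/orP[H|/andP[hp _]]|/andP[_ /existsP[a H]]] hp' hF.
- exact: IH.
- by rewrite hp in hp'.
- move: H; case hT: (T q a) => [t|] // Ht; exists a, t; split=> //; by exists k.
Qed.

Lemma exists_SR q : exists a t, SR q a /\ T q a = Some t /\ (W q -> W t).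
Proof.
case: (Henabled q) => a0; case hT0: (T q a0) => [t0|] // _.
case hp: (p1 q).
  exists a0, t0; split; first by rewrite /SRActs hT0 hp => -[].
  split=> // Wq; exact: W_P1 Wq hp hT0.
case: (classic (W q)) => Wq; last first.
  exists a0, t0; split; first by rewrite /SRActs hT0 => -[_ []].
  by split.
case: (boolP (q \in F)) => hF.
  exists a0, t0; split; first by rewrite /SRActs hT0 => -[_ [_]]; rewrite inE hF.
  split=> // _; move: (@Hsink _ a0 hF); rewrite hT0 => /(_ ltac:(done)) [->]; done.
case: (boolP (q \in Y)) => hY.
  case: Wq => k Hk; have [a [t [hT Wt]]] := P2_succ Hk (negbT hp) hF.
  exists a, t; split; first by rewrite /SRActs hT => -[_ [_]]; rewrite inE hY orbT.
  by split.
have hFY : q \notin F :|: Y by rewrite inE negb_or hF hY.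
have [a [t [hT Hr]]] := rank_step Wq hFY (negbT hp).
exists a, t; split; first by rewrite /SRActs hT.
split=> // _; move: Hr; case hr: (rank p1 T (F :|: Y) t) => [m|] // _.
exact: WFY (rank_some hr).
Qed.

Lemma CL q a t : W q -> (p1 q \/ (q \notin Y /\ SR q a)) -> T q a = Some t -> W t.
Proof.
move=> Wq [hp|[hY hSR]] hT; first exact: W_P1 Wq hp hT.
case hp: (p1 q); first exact: W_P1 Wq hp hT.
case: (boolP (q \in F)) => hF.
  move: (@Hsink _ a hF); rewrite hT => /(_ ltac:(done)) [->]; done.
move: hSR; rewrite /SRActs hT => /(_ (conj (negbT hp) (conj Wq _))).
rewrite inE negb_or hF hY => /(_ erefl).
case hr: (rank p1 T (F :|: Y) t) => [m|] // _.
exact: WFY (rank_some hr).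
Qed.


Fixpoint L (R : S -> Prop) (k : nat) (q : S) : Prop :=
  match k with
  | 0 => R q
  | k'.+1 => L R k' q \/
      (p1 q /\ exists a t, T q a = Some t /\ W t /\ L R k' t) \/
      (~~ p1 q /\ forall a t, SR q a -> T q a = Some t -> W t -> L R k' t)
  end.
Definition Attr R q := exists k, L R k q.

Lemma L_le R j k q : j <= k -> L R j q -> L R k q.
Proof.
elim: k => [|k IH]; first by rewrite leqn0 => /eqP->.
rewrite leq_eqVlt => /orP[/eqP-> //|hlt] H; left; exact: IH.
Qed.

Lemma out_P1 R q a t : W q -> ~ Attr R q -> p1 q -> T q a = Some t ->
  ~ Attr R t /\ W t.
Proof.
move=> Wq hA hp hT; have Wt := W_P1 Wq hp hT; split=> // -[k Hk].
apply: hA; exists k.+1; right; left; split=> //; by exists a, t.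
Qed.

Lemma out_P2 R q : W q -> ~ Attr R q -> ~~ p1 q ->
  exists a t, SR q a /\ T q a = Some t /\ W t /\ ~ Attr R t.
Proof.
move=> Wq hA hp; apply: NNPP => Hn; apply: hA.
have [K HK] : exists K, forall a t, SR q a -> T q a = Some t -> W t -> L R K t.
  apply: (unif_bound (P := fun a K => forall t, SR q a -> T q a = Some t -> W t -> L R K t)).
    move=> a j k hjk Hj t h1 h2 h3; exact: L_le hjk (Hj t h1 h2 h3).
  move=> a; case: (classic (exists t, SR q a /\ T q a = Some t /\ W t)).
    move=> [t [h1 [h2 h3]]].
    have [k Hk] : Attr R t by apply: NNPP => hn; apply: Hn; exists a, t.
    by exists k => t' _; rewrite h2 => -[<-] _.
  move=> Hno; exists 0 => t h1 h2 h3; exfalso; apply: Hno; by exists t.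
exists K.+1; right; right; split=> //.
Qed.

Definition dflt q : A := proj1_sig (constructive_indefinite_description _ (Henabled q)).
Lemma dflt_en q : T q (dflt q) <> None.
Proof. exact: proj2_sig (constructive_indefinite_description _ (Henabled q)). Qed.

Definition good R q a := exists k t, L R k.+1 q /\ ~ L R k q /\ T q a = Some t /\ W t /\ L R k t.

Definition pi1 R q : A :=
  match excluded_middle_informative (exists a, good R q a) with
  | left H => proj1_sig (constructive_indefinite_description _ H)
  | right _ => dflt q
  end.

Lemma pi1_good R q : (exists a, good R q a) -> good R q (pi1 R q).
Proof.
move=> H; rewrite /pi1; case: excluded_middle_informative => // H'.
exact: proj2_sig (constructive_indefinite_description _ H').
Qed.

Lemma pi1_en R q : T q (pi1 R q) <> None.
Proof.
rewrite /pi1; case: excluded_middle_informative => [H|_]; last exact: dflt_en.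
have [k [t [_ [_ [-> _]]]]] := proj2_sig (constructive_indefinite_description _ H).
by [].
Qed.

Definition pi2 R q : A :=
  match excluded_middle_informative
          (exists a, exists t, SR q a /\ T q a = Some t /\ W t /\ ~ Attr R t) with
  | left H => proj1_sig (constructive_indefinite_description _ H)
  | right _ => proj1_sig (constructive_indefinite_description _ (exists_SR q))
  end.

Lemma pi2_prop R q : exists t, SR q (pi2 R q) /\ T q (pi2 R q) = Some t /\ (W q -> W t) /\
   ((exists a, exists t, SR q a /\ T q a = Some t /\ W t /\ ~ Attr R t) -> W t /\ ~ Attr R t).
Proof.
rewrite /pi2; case: excluded_middle_informative => [H|H].
  have [t [h1 [h2 [h3 h4]]]] := proj2_sig (constructive_indefinite_description _ H).
  by exists t.
have [t [h1 [h2 h3]]] := proj2_sig (constructive_indefinite_description _ (exists_SR q)).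
by exists t; split; [|split; [|split]] => //.
Qed.

Lemma desc R (p : nat -> S) :
  (forall i, ~ R (p i) -> W (p i) -> W (p i.+1) /\
     (p1 (p i) -> T (p i) (pi1 R (p i)) = Some (p i.+1)) /\
     (~~ p1 (p i) -> exists a, SR (p i) a /\ T (p i) a = Some (p i.+1))) ->
  forall k i, L R k (p i) -> W (p i) -> exists j, R (p j).
Proof.
move=> Hst; elim=> [|k IH] i; first by move=> H _; exists i.
case: (classic (R (p i))) => [HR _ _|HR]; first by exists i.
case: (classic (L R k (p i))) => [Hk _ Wi|Hk]; first exact: IH Hk Wi.
move=> HL Wi; have [Wi' [H1 H2]] := Hst i HR Wi.
case: (HL) => [//|[[hp [a [t [hT [Wt Ht]]]]]|[hp Hall]]].
- have : exists a, good R (p i) a by exists a, k, t.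
  move/pi1_good => [k' [t' [Hk'1 [Hk'2 [hT' [Wt' Ht']]]]]].
  have hk' : k' <= k.
    rewrite leqNgt; apply/negP => hlt; apply: Hk'2; exact: L_le hlt HL.
  rewrite H1 // in hT'; case: hT' => Heq; rewrite -Heq in Ht'.
  apply: (IH i.+1) => //; exact: L_le hk' Ht'.
- have [a [hSR hT]] := H2 hp.
  exact: IH i.+1 (Hall a _ hSR hT Wi') Wi'.
Qed.

Lemma L_mono R1 R2 : (forall q, W q -> R1 q -> R2 q) ->
  forall k q, W q -> L R1 k q -> L R2 k q.
Proof.
move=> H12; elim=> [|k IH] q Wq /=; first exact: H12.
case=> [H|[[hp [a [t [hT [Wt Ht]]]]]|[hp Hall]]].
- left; exact: IH.
- right; left; split=> //; exists a, t; split; [done|split; [done|exact: IH]].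
- right; right; split=> // a t h1 h2 h3; exact: IH t h3 (Hall a t h1 h2 h3).
Qed.

Lemma attr_idem R1 R2 : (forall q, W q -> R1 q -> Attr R2 q) ->
  forall k q, W q -> L R1 k q -> Attr R2 q.
Proof.
move=> H12; elim=> [|k IH] q Wq /=; first exact: H12.
case=> [H|[[hp [a [t [hT [Wt Ht]]]]]|[hp Hall]]].
- exact: IH.
- have [j Hj] := IH t Wt Ht; exists j.+1; right; left; split=> //.
  by exists a, t.
- have [K HK] : exists K, forall a t, SR q a -> T q a = Some t -> W t -> L R2 K t.
    apply: (unif_bound (P := fun a K => forall t, SR q a -> T q a = Some t -> W t -> L R2 K t)).
      move=> a j k' hjk Hj t h1 h2 h3; exact: L_le hjk (Hj t h1 h2 h3).
    move=> a; case: (classic (exists t, SR q a /\ T q a = Some t /\ W t)).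
      move=> [t [h1 [h2 h3]]].
      have [j Hj] := IH t h3 (Hall a t h1 h2 h3).
      by exists j => t' _; rewrite h2 => -[<-] _.
    move=> Hno; exists 0 => t h1 h2 h3; exfalso; apply: Hno; by exists t.
  exists K.+1; right; right; by split.
Qed.


Lemma dsw_iff (X : {set S}) s : W s ->
  (DSWin1 p1 T F X Y s <-> Attr (fun q => q \in X :|: Y) s).
Proof.
move=> Ws; split.
  move=> [pi [HSR1 Hall]]; apply: NNPP => hA.
  pose R := (fun q => q \in X :|: Y).
  pose act q := if p1 q then pi q else pi2 R q.
  have step_ok : forall q, W q -> ~ Attr R q ->
      exists t, Ttrue T X Y q (act q) = Some t /\ W t /\ ~ Attr R t.
    move=> q Wq hq.
    have hq' : q \notin X :|: Y by apply/negP => h; apply: hq; exists 0.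
    rewrite /act /Ttrue (negbTE hq'); case hp: (p1 q).
      have := HSR1 q hp; rewrite /SRActs; case hT: (T q (pi q)) => [t|] // _.
      have [h1 h2] := out_P1 Wq hq hp hT; by exists t.
    have Hex := out_P2 Wq hq (negbT hp).
    have [t' [_ [h2 [_ h4]]]] := pi2_prop R q.
    have [Wt' hAt'] := h4 Hex.
    by exists t'.
  pose nxt q := match Ttrue T X Y q (act q) with Some t => t | None => q end.
  pose p i := iter i nxt s.
  have inv : forall i, W (p i) /\ ~ Attr R (p i).
    elim=> [|i [Wi hi]]; first by split.
    have [t [h1 [h2 h3]]] := step_ok _ Wi hi.
    by rewrite /p iterS -/(p i) /nxt h1.
  have := Hall (pi2 R) _ p erefl.
  case.
  - move=> q hp; have [t [h1 _]] := pi2_prop R q; exact: h1.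
  - move=> i; have [Wi hi] := inv i.
    have [t [h1 _]] := step_ok _ Wi hi.
    change (Ttrue T X Y (p i) (act (p i)) = Some (nxt (p i))); by rewrite /nxt h1.
  - move=> i hi; apply: (proj2 (inv i)); by exists 0.
move=> [k Hk]; exists (pi1 (fun q => q \in X :|: Y)); split.
  move=> q hp; rewrite /SRActs; case hT: (T q _) => [t|]; last by apply: pi1_en hT.
  by rewrite hp => -[].
move=> pi2' HSR2 p hp0 hpath.
apply: (@desc (fun q => q \in X :|: Y) p _ k 0); [|by rewrite hp0|by rewrite hp0].
move=> i hR Wi.
have := hpath i; rewrite /Ttrue (negbTE (introN idP hR)) => hT.
case hp: (p1 (p i)) in hT.
  split; first exact: CL Wi (or_introl hp) hT.
  split=> [_|]; [exact: hT | by rewrite hp].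
have hY : p i \notin Y by apply/negP => h; apply: hR; rewrite inE h orbT.
split; first exact: CL Wi (or_intror (conj hY (HSR2 _ (negbT hp)))) hT.
split=> [h|_]; first by rewrite hp in h.
exists (pi2' (p i)); split=> //; apply: HSR2; by rewrite hp.
Qed.


Definition hpath (nxt : seq S -> S -> S) (s : S) : nat -> seq S * S :=
  fix f n := match n with
             | 0 => ([::], s)
             | n'.+1 => let hq := f n' in (rcons hq.1 hq.2, nxt hq.1 hq.2)
             end.

Lemma hpath_hist nxt s n :
  (hpath nxt s n).1 = mkseq (fun i => (hpath nxt s i).2) n.
Proof. elim: n => [//|n IH]; by rewrite mkseqS /= IH. Qed.

Lemma sw_iff (R : S -> Prop) s : W s ->
  (sure_win1 p1 (hat_step p1 T F Y) W R s <-> Attr R s).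
Proof.
move=> Ws; split.
  move=> [_ [sigma1 [Hs1 Hall]]]; apply: NNPP => hA.
  pose act h q := (if p1 q then sigma1 else fun _ q => pi2 R q) h q.
  have step_ok : forall h q, W q -> ~ Attr R q ->
      exists t, hat_step p1 T F Y q (act h q) t /\ T q (act h q) = Some t /\ ~ Attr R t.
    move=> h q Wq hq; rewrite /act; case hp: (p1 q).
      have [t Ht] := Hs1 h q Wq hp; have [_ [_ [hT Wt]]] := Ht.
      have [h1 h2] := out_P1 Wq hq hp hT; by exists t.
    have Hex := out_P2 Wq hq (negbT hp).
    have [t' [h1 [h2 [_ h4]]]] := pi2_prop R q.
    have [Wt' hAt'] := h4 Hex.
    by exists t'.
  pose nxt h q := match T q (act h q) with Some t => t | None => q end.
  pose p i := (hpath nxt s i).2.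
  have hist : forall i, (hpath nxt s i).1 = mkseq p i by move=> i; exact: hpath_hist.
  have pS : forall i, p i.+1 = nxt (mkseq p i) (p i).
    by move=> i; rewrite /p /= -/(p i) hist.
  have inv : forall i, W (p i) /\ ~ Attr R (p i).
    elim=> [|i [Wi hi]]; first by split.
    have [t [[_ [_ [_ Wt]]] [h1 h2]]] := step_ok (mkseq p i) _ Wi hi.
    by rewrite pS /nxt h1.
  have := Hall (fun _ q => pi2 R q) _ p erefl.
  case.
  - move=> h q Wq hp; have [t [h1 [h2 [h3 _]]]] := pi2_prop R q.
    exists t; split=> //; split=> //; split=> //; exact: h3.
  - move=> i; have [Wi hi] := inv i.
    have [t [h1 [h2 _]]] := step_ok (mkseq p i) _ Wi hi.
    rewrite pS /nxt; change (hat_step p1 T F Y (p i) (act (mkseq p i) (p i))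
       match T (p i) (act (mkseq p i) (p i)) with Some t => t | None => p i end).
    by rewrite h2.
  - move=> i hi; apply: (proj2 (inv i)); by exists 0.
move=> [k Hk]; split=> //; exists (fun _ q => pi1 R q); split.
  move=> h q Wq hp; case hT: (T q (pi1 R q)) => [t|]; last by have := pi1_en hT.
  exists t; split=> //; split; first by rewrite /SRActs hT hp => -[].
  split=> //; exact: CL Wq (or_introl hp) hT.
move=> sigma2 _ p hp0 hpath.
apply: (@desc R p _ k 0); [|by rewrite hp0|by rewrite hp0].
move=> i _ Wi; have [_ [hSR [hT Wt]]] := hpath i.
split=> //; case hp: (p1 (p i)) in hSR hT *.
  split=> // h; by rewrite hp in h.
split=> // _; by exists (sigma2 (mkseq p i) (p i)).
Qed.

End Proof.

Theorem proposition4 (S A : finType) (p1 : pred S) (T : S -> A -> option S)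
    (s0 : S) (F Y : {set S}) (s1 s2 : S)
    (Henabled : forall s, exists a, T s a <> None)
    (Hsink : forall f a, f \in F -> T f a <> None -> T f a = Some f)
    (HY : forall y, y \in Y -> Win2 p1 T F y /\ y \notin F)
    (Hs1 : Win2 p1 T F s1 /\ s1 \notin F :|: Y)
    (Hs2 : Win2 p1 T F s2 /\ s2 \notin F :|: Y) :
  forall s, Win2 p1 T F s ->
    (DSWin1 p1 T F [set s1; s2] Y s <->
     sure_win1 p1 (hat_step p1 T F Y) (Win2 p1 T F)
       (fun q => DSWin1 p1 T F [set s1] Y q \/ DSWin1 p1 T F [set s2] Y q) s).
Proof.
have HY' : forall y, y \in Y -> Win2 p1 T F y by move=> y /HY [].
move=> s Ws.
have D := dsw_iff Henabled Hsink HY'.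
rewrite (D _ _ Ws) (sw_iff Henabled Hsink HY' _ Ws).
split.
  move=> [k Hk]; exists k; apply: (L_mono _ Ws Hk) => q Wq.
  rewrite !inE => /orP[/orP[h|h]|h].
  - left; apply/(D _ _ Wq); exists 0; by rewrite /= !inE h.
  - right; apply/(D _ _ Wq); exists 0; by rewrite /= !inE h.
  - left; apply/(D _ _ Wq); exists 0; by rewrite /= !inE h orbT.
move=> [k Hk]; apply: (attr_idem _ Ws Hk) => q Wq [h|h].
- have [j Hj] := proj1 (D _ _ Wq) h; exists j; apply: (L_mono _ Wq Hj) => x _.
  rewrite !inE => /orP[->|->] //; by rewrite orbT.
- have [j Hj] := proj1 (D _ _ Wq) h; exists j; apply: (L_mono _ Wq Hj) => x _.
  rewrite !inE => /orP[->|->]; by rewrite ?orbT.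
Qed.
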